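(* Let $\mathfrak{P}$ be a nonempty compact set of probability distributions $P=(p_\omega)_{\omega\in\Omega}$ on $\Omega$ and $\Phi_A(\mathbf{x})=\max_{P\in\mathfrak{P}}\sum_{\omega\in\Omega}p_\omega Q_\omega(\mathbf{x})$. Let $\hat{\mathbf{x}}\in\mathcal{X}$, for each $\omega$ let $\hat{\mathbf{S}}^\omega$ be an optimal solution of the problem defining $Q_\omega(\hat{\mathbf{x}})$, and let $(\hat p_\omega)_{\omega\in\Omega}\in\arg\max_{P\in\mathfrak{P}}\sum_{\omega\in\Omega}p_\omega f^\omega(\hat{\mathbf{S}}^\omega)$. For each $\omega,q$ fix an ordering $\hat S^\omega_q=\{i^\omega_{q,1},\dots,i^\omega_{q,T^\omega_q}\}$ and for $1\le t\le T^\omega_q$ let $\hat{\mathbf{S}}^\omega_{q,(t)}=(\hat S^\omega_1,\dots,\hat S^\omega_{q-1},\{i^\omega_{q,1},\dots,i^\omega_{q,t-1}\},\emptyset,\dots,\emptyset)$. Then for every $\mathbf{x}\in\mathcal{X}$, $$\Phi_A(\mathbf{x})\;\ge\;\Phi_A(\hat{\mathbf{x}})-\sum_{q=1}^k\sum_{\omega\in\Omega}\sum_{t=1}^{T^\omega_q}\hat p_\omega\,\rho^\omega_{q,i^\omega_{q,t}}(\hat{\mathbf{S}}^\omega_{q,(t)})\,\xi^\omega_{i^\omega_{q,t}}\,x_{q,i^\omega_{q,t}}.$$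
   Context: Let $n,k$ be positive integers and $N=\{1,\dots,n\}$. $\mathbb{X}(N,k)$ denotes the set of $k$-tuples $\mathbf{S}=(S_1,\dots,S_k)$ of pairwise disjoint subsets of $N$; such a tuple is identified with $\mathbf{s}\in\{0,1\}^{kn}$ where $s_{q,i}=1$ iff $i\in S_q$. For $\mathbf{X},\mathbf{Y}\in\mathbb{X}(N,k)$ let $\mathbf{X}\sqcap\mathbf{Y}=(X_1\cap Y_1,\dots,X_k\cap Y_k)$ and $\mathbf{X}\sqcup\mathbf{Y}$ be the tuple whose $i$-th component is $(X_i\cup Y_i)\setminus\bigcup_{q\ne i}(X_q\cup Y_q)$. A function $f:\mathbb{X}(N,k)\to\mathbb{R}$ is $k$-submodular if $f(\mathbf{X})+f(\mathbf{Y})\ge f(\mathbf{X}\sqcap\mathbf{Y})+f(\mathbf{X}\sqcup\mathbf{Y})$ for all $\mathbf{X},\mathbf{Y}$, and monotone if $f(\mathbf{X})\le f(\mathbf{Y})$ whenever $X_q\subseteq Y_q$ for all $q$. $\boldsymbol{\emptyset}=(\emptyset,\dots,\emptyset)$. Given nonnegative integer budgets $A_1,\dots,A_k$ and $D_1,\dots,D_k$, the attacker's feasible set is $\mathcal{X}=\{\mathbf{x}\in\{0,1\}^{kn}:\sum_{i=1}^n x_{q,i}\le A_q\ \forall q,\ \sum_{q=1}^k x_{q,i}\le 1\ \forall i\in N\}$. Stochastic setting: $\Omega$ is a finite set of scenarios; for each $\omega\in\Omega$ we are given $\xi^\omega\in\{0,1\}^n$ and a monotone $k$-submodular function $f^\omega:\mathbb{X}(N,k)\to\mathbb{R}$,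 with marginal gains $\rho^\omega_{q,i}(\mathbf{X})=f^\omega(X_1,\dots,X_q\cup\{i\},\dots,X_k)-f^\omega(\mathbf{X})$ for $i\notin\bigcup_r X_r$. For $\mathbf{x}\in\mathcal{X}$, $Q_\omega(\mathbf{x})=\max\{f^\omega(\mathbf{S}):\mathbf{S}\in\mathbb{X}(N,k),\ s_{q,i}\le 1-x_{q,i}\xi^\omega_i\ \forall q,i,\ \sum_{i=1}^n s_{q,i}\le D_q\ \forall q\}$. *)

(* Defs.v *)
From HB Require Import structures.
From mathcomp Require Import all_boot all_order all_algebra.
From mathcomp Require Import all_classical all_reals all_analysis.
Set Implicit Arguments. Unset Strict Implicit. Unset Printing Implicit Defensive.
Import Order.TTheory GRing.Theory Num.Theory.
Import numFieldNormedType.Exports.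
Local Open Scope ring_scope.

(* An element of X(N,k) (k-tuple of pairwise disjoint subsets of N = 'I_n)
   is encoded as its labeling: S i = Some q  iff  i \in S_q,
   S i = None iff i is in no S_q. *)
Definition kset (n k : nat) := {ffun 'I_n -> option 'I_k}.

Definition kempty (n k : nat) : kset n k := [ffun _ => None].

Definition comp n k (X : kset n k) (q : 'I_k) : {set 'I_n} :=
  [set i | X i == Some q].

Definition kmeet n k (X Y : kset n k) : kset n k :=
  [ffun i => if X i == Y i then X i else None].

(* X ⊔ Y : i-th component is (X_i ∪ Y_i) minus the other unions *)
Definition kjoin n k (X Y : kset n k) : kset n k :=
  [ffun i => match X i, Y i with
             | None, b => b
             | a, None => a
             | Some a, Some b => if a == b then Some a else None
             end].

Definition k_submodular n k (R : realType) (f : kset n k -> R) :=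
  forall X Y : kset n k, f (kmeet X Y) + f (kjoin X Y) <= f X + f Y.

Definition ksubset n k (X Y : kset n k) :=
  forall q : 'I_k, comp X q \subset comp Y q.

Definition k_monotone n k (R : realType) (f : kset n k -> R) :=
  forall X Y : kset n k, ksubset X Y -> f X <= f Y.

Definition kadd n k (X : kset n k) (q : 'I_k) (i : 'I_n) : kset n k :=
  [ffun j => if j == i then Some q else X j].

Definition marg n k (R : realType) (f : kset n k -> R) (q : 'I_k) (i : 'I_n)
  (X : kset n k) : R := f (kadd X q i) - f X.

(* attacker feasibility: x in \mathcal X (the constraint sum_q x_{q,i} <= 1
   is built into the encoding) *)
Definition attacker_feasible n k (A : 'I_k -> nat) (x : kset n k) :=
  forall q : 'I_k, (#|comp x q| <= A q)%N.

Definition xval n k (x : kset n k) (q : 'I_k) (i : 'I_n) : bool := x i == Some q.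

Definition def_feasible n k (D : 'I_k -> nat) (xi : 'I_n -> bool)
  (x : kset n k) (S : kset n k) : bool :=
  [forall q : 'I_k, [forall i : 'I_n,
      (S i == Some q) ==> ~~ (xval x q i && xi i)]]
  && [forall q : 'I_k, (#|comp S q| <= D q)%N].

(* Q_omega(x) = max of f over defender-feasible S (S = empty is feasible) *)
Definition Qval n k (R : realType) (D : 'I_k -> nat) (xi : 'I_n -> bool)
  (f : kset n k -> R) (x : kset n k) : R :=
  \big[Num.max/f (kempty n k)]_(S : kset n k | def_feasible D xi x S) f S.

Definition prob_dist (R : realType) m (P : 'rV[R]_m) :=
  (forall w : 'I_m, 0 <= P 0 w) /\ \sum_(w < m) P 0 w = 1.

(* Phi_A(x) = max_{P in frakP} sum_w p_w Q_w(x); the max exists by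
   compactness, so it equals the supremum. *)
Definition PhiA n k m (R : realType) (frakP : set 'rV[R]_m)
  (D : 'I_k -> nat) (xi : 'I_m -> 'I_n -> bool) (f : 'I_m -> kset n k -> R)
  (x : kset n k) : R :=
  sup [set \sum_(w < m) P 0 w * Qval D (xi w) (f w) x | P in frakP].

(* Ŝ_{q,(t)} (with t 0-indexed: the q-th component consists of the first t
   elements of the ordering ord of Ŝ_q) *)
Definition Spart n k (S : kset n k) (q : 'I_k) (ord : seq 'I_n) (t : nat)
  : kset n k :=
  [ffun i => match S i with
             | Some r => if (r < q)%N then Some r
                         else if (r == q) && (i \in take t ord) then Some q
                         else None
             | None => None
             end].

(* Main.v *)
Require Import Defs.
From HB Require Import structures.
From mathcomp Require Import all_boot all_order all_algebra.
From mathcomp Require Import all_classical all_reals all_analysis.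
From mathcomp Require Import lra.
Import Order.TTheory GRing.Theory Num.Theory.
Import numFieldNormedType.Exports.
Local Open Scope ring_scope.
Set Implicit Arguments. Unset Strict Implicit. Unset Printing Implicit Defensive.

Definition prune n k (rm : 'I_n -> bool) (X : kset n k) : kset n k :=
  [ffun i => if rm i then None else X i].

Lemma ksubsetP n k (X Y : kset n k) :
  ksubset X Y -> forall j r, X j = Some r -> Y j = Some r.
Proof.
move=> h j r hX; have := h r; move/fintype.subsetP/(_ j).
by rewrite !inE hX eqxx => /(_ isT) /eqP.
Qed.

Lemma orth n k (R : realType) (f : kset n k -> R) (hsub : k_submodular f)
  (X Y : kset n k) q i : ksubset X Y -> Y i = None ->
  marg f q i Y <= marg f q i X.
Proof.
move=> hXY hYi.
have hXi : X i = None.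
  case E: (X i) => [r|] //; by rewrite (ksubsetP hXY E) in hYi.
have := hsub (Defs.kadd X q i) Y.
have -> : kmeet (Defs.kadd X q i) Y = X.
  apply/ffunP => j; rewrite !ffunE.
  case: (eqVneq j i) => [->|ne]; first by rewrite hXi hYi.
  case E: (X j) => [r|] //=; first by rewrite (ksubsetP hXY E) eqxx.
  by case: (Y j).
have -> : kjoin (Defs.kadd X q i) Y = Defs.kadd Y q i.
  apply/ffunP => j; rewrite !ffunE.
  case: (eqVneq j i) => [->|ne]; first by rewrite hYi.
  case E: (X j) => [r|] //=; first by rewrite (ksubsetP hXY E) eqxx.
rewrite /marg => h; lra.
Qed.

Lemma prune_sub n k rm (X : kset n k) : ksubset (prune rm X) X.
Proof.
move=> q; apply/fintype.subsetP => j; rewrite !inE ffunE.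
by case: (rm j).
Qed.

Lemma prune_kadd n k rm (X : kset n k) q a :
  prune rm (Defs.kadd X q a) = if rm a then prune rm X else Defs.kadd (prune rm X) q a.
Proof.
apply/ffunP => j; case h: (rm a); rewrite !ffunE.
  by case: (eqVneq j a) => [->|]; rewrite ?h.
by case: (eqVneq j a) => [->|]; rewrite ?h //= ffunE.
Qed.

Lemma seg n k (R : realType) (f : kset n k -> R) (hsub : k_submodular f)
  rm (o : seq 'I_n) q (C : nat -> kset n k) :
  (forall t x0, (t < size o)%N -> C t.+1 = Defs.kadd (C t) q (nth x0 o t)) ->
  (forall t x0, (t < size o)%N -> C t (nth x0 o t) = None) ->
  uniq o ->
  forall t, (t <= size o)%N ->
  f (C t) - f (prune rm (C t)) <=
  f (C 0%N) - f (prune rm (C 0%N)) +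
  \sum_(i <- take t o) marg f q i (C (index i o)) * (rm i)%:R.
Proof.
move=> hC hN hu; elim=> [|t IH] ht.
  by rewrite take0 big_nil addr0.
have x0 : 'I_n by case: o ht {hC hN hu IH} => // a.
have ht' : (t < size o)%N by [].
rewrite (take_nth x0 ht') -cats1 big_cat /= big_seq1 index_uniq // (hC t x0 ht') prune_kadd.
have := IH (ltnW ht); case: (rm (nth x0 o t)).
  rewrite /marg mulr1 => h. lra.
rewrite mulr0 addr0 => h.
have := @orth _ _ _ f hsub _ _ q (nth x0 o t) (prune_sub rm (C t)) (hN t x0 ht').
rewrite /marg => h2; lra.
Qed.

Definition Epart n k (S : kset n k) (j : nat) : kset n k :=
  [ffun i => match S i with
             | Some r => if (r < j)%N then Some r else None
             | None => None end].

Section SP.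
Lemma sp_step n k (S : kset n k) q (o : seq 'I_n) t x0 :
  uniq o -> (forall i, (i \in o) = (S i == Some q)) -> (t < size o)%N ->
  Spart S q o t.+1 = Defs.kadd (Spart S q o t) q (nth x0 o t).
Proof.
move=> hu hmem ht; apply/ffunP => j; rewrite !ffunE (take_nth x0 ht) -cats1 mem_cat mem_seq1.
case: (eqVneq j (nth x0 o t)) => [->|ne].
  have := hmem (nth x0 o t); rewrite mem_nth // => /esym/eqP ->.
  by rewrite ltnn eqxx orbT.
by rewrite orbF.
Qed.

Lemma sp_none n k (S : kset n k) q (o : seq 'I_n) t x0 :
  uniq o -> (forall i, (i \in o) = (S i == Some q)) -> (t < size o)%N ->
  Spart S q o t (nth x0 o t) = None.
Proof.
move=> hu hmem ht; rewrite ffunE.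
have := hmem (nth x0 o t); rewrite mem_nth // => /esym/eqP ->.
by rewrite ltnn eqxx /= in_take_leq ?(ltnW ht) // index_uniq // ltnn.
Qed.

Lemma sp0 n k (S : kset n k) q (o : seq 'I_n) :
  Spart S q o 0 = Epart S q.
Proof.
apply/ffunP => j; rewrite !ffunE take0 in_nil.
by case: (S j) => // r; case: ifP => //; rewrite andbF.
Qed.

Lemma spT n k (S : kset n k) q (o : seq 'I_n) :
  (forall i, (i \in o) = (S i == Some q)) ->
  Spart S q o (size o) = Epart S q.+1.
Proof.
move=> hmem; apply/ffunP => j; rewrite !ffunE take_size hmem.
case E: (S j) => [r|] //.
case: (ltngtP r q) => h.
- by rewrite ltnS ltnW.
- have hq : (r == q) = false by apply/negbTE; rewrite -val_eqE /= gtn_eqF.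
  by rewrite hq ltnS leqNgt h.
- have -> : r = q by apply: val_inj.
  by rewrite !eqxx ltnSn.
Qed.
End SP.

Lemma chain n k (R : realType) (f : kset n k -> R) (hsub : k_submodular f)
  rm (S : kset n k) (o : 'I_k -> seq 'I_n)
  (hu : forall q, uniq (o q))
  (hmem : forall q i, (i \in o q) = (S i == Some q)) :
  forall j, (j <= k)%N ->
  f (Epart S j) - f (prune rm (Epart S j)) <=
  \sum_(q < k | (q < j)%N) \sum_(i <- o q)
     marg f q i (Spart S q (o q) (index i (o q))) * (rm i)%:R.
Proof.
elim=> [|j IH] hj.
  have -> : prune rm (Epart S 0) = Epart S 0.
    apply/ffunP => i; rewrite !ffunE; case: (rm i) => //.
    by case: (S i).
  by rewrite subrr big_pred0 // => q.
pose q0 := Ordinal hj.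
have := @seg n k R f hsub rm (o q0) q0 (fun t => Spart S q0 (o q0) t)
  (fun t x0 ht => sp_step x0 (hu q0) (hmem q0) ht)
  (fun t x0 ht => sp_none x0 (hu q0) (hmem q0) ht) (hu q0) (size (o q0)) (leqnn _).
rewrite take_size sp0 spT //= => h.
rewrite (bigD1 q0) /=; last by rewrite ltnSn.
have -> : \sum_(q < k | (q < j.+1)%N && (q != q0))
     \sum_(i <- o q) marg f q i (Spart S q (o q) (index i (o q))) * (rm i)%:R =
   \sum_(q < k | (q < j)%N)
     \sum_(i <- o q) marg f q i (Spart S q (o q) (index i (o q))) * (rm i)%:R.
  apply: eq_bigl => q; rewrite -val_eqE /= ltnS leq_eqVlt.
  by case: (ltngtP q j).
have := IH (ltnW hj); lra.
Qed.

Lemma perscen n k (R : realType) (f : kset n k -> R) (hsub : k_submodular f)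
  rm (S : kset n k) (o : 'I_k -> seq 'I_n)
  (hu : forall q, uniq (o q))
  (hmem : forall q i, (i \in o q) = (S i == Some q)) :
  f S - f (prune rm S) <=
  \sum_(q < k) \sum_(i <- o q)
     marg f q i (Spart S q (o q) (index i (o q))) * (rm i)%:R.
Proof.
have := chain hsub rm hu hmem (leqnn k).
have -> : Epart S k = S.
  apply/ffunP => i; rewrite !ffunE; case: (S i) => // r.
  by rewrite ltn_ord.
by under eq_bigl do rewrite ltn_ord.
Qed.

Lemma kempty_feas n k (D : 'I_k -> nat) (xi : 'I_n -> bool) (y : kset n k) :
  def_feasible D xi y (kempty n k).
Proof.
apply/andP; split; apply/forallP => q.
  by apply/forallP => i; rewrite ffunE.
have -> : Defs.comp (kempty n k) q = finset.set0.
  by apply/setP => i; rewrite !inE ffunE.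
by rewrite cards0.
Qed.

Lemma prune_feas n k (D : 'I_k -> nat) (xi : 'I_n -> bool) (y x : kset n k) S :
  def_feasible D xi y S ->
  def_feasible D xi x (prune (fun i => xi i && (x i == S i)) S).
Proof.
case/andP=> _ /forallP hc; apply/andP; split; apply/forallP => q.
  apply/forallP => i; rewrite ffunE.
  case: (xi i) => /=; last by rewrite andbF implybT.
  case: (eqVneq (x i) (S i)) => //= ne.
  apply/implyP => /eqP hS; rewrite /xval -hS; apply/negP => /andP [/eqP e _].
  by rewrite e hS eqxx in ne.
apply: (leq_trans _ (hc q)); apply: subset_leq_card.
by apply/fintype.subsetP => i; rewrite !inE ffunE; case: ifP.
Qed.

Local Open Scope classical_set_scope.

Theorem theorem5 (R : realType) (n k m : nat)
  (A D : 'I_k -> nat)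
  (xi : 'I_m -> 'I_n -> bool)
  (f : 'I_m -> kset n k -> R)
  (hmono : forall w, k_monotone (f w))
  (hsub : forall w, k_submodular (f w))
  (frakP : set 'rV[R]_m)
  (hP0 : frakP !=set0)
  (hPc : compact frakP)
  (hPd : forall P, frakP P -> prob_dist P)
  (xhat : kset n k) (hxhat : attacker_feasible A xhat)
  (Shat : 'I_m -> kset n k)
  (hSfeas : forall w, def_feasible D (xi w) xhat (Shat w))
  (hSopt : forall w (S : kset n k), def_feasible D (xi w) xhat S ->
             f w S <= f w (Shat w))
  (phat : 'rV[R]_m) (hphatP : frakP phat)
  (hphat : forall P, frakP P ->
     \sum_(w < m) P 0 w * f w (Shat w) <= \sum_(w < m) phat 0 w * f w (Shat w))
  (ord : 'I_m -> 'I_k -> seq 'I_n)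
  (hord_uniq : forall w q, uniq (ord w q))
  (hord_mem : forall w q i, (i \in ord w q) = (Shat w i == Some q)) :
  forall x : kset n k, attacker_feasible A x ->
    PhiA frakP D xi f x >=
    PhiA frakP D xi f xhat -
    \sum_(q < k) \sum_(w < m) \sum_(i <- ord w q)
      phat 0 w
      * marg (f w) q i (Spart (Shat w) q (ord w q) (index i (ord w q)))
      * (xi w i)%:R
      * (xval x q i)%:R.
Proof.
move=> x hx.
pose T w := \sum_(q < k) \sum_(i <- ord w q)
      marg (f w) q i (Spart (Shat w) q (ord w q) (index i (ord w q)))
      * (xi w i)%:R * (xval x q i)%:R.
have stepA : forall w, f w (Shat w) - T w <= Qval D (xi w) (f w) x.
  move=> w.
  have hp := perscen (hsub w) (fun i => xi w i && (x i == Shat w i))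
     (hord_uniq w) (hord_mem w).
  have eT : \sum_(q < k) \sum_(i <- ord w q)
     marg (f w) q i (Spart (Shat w) q (ord w q) (index i (ord w q))) *
     (xi w i && (x i == Shat w i))%:R = T w.
    apply: eq_bigr => q _; rewrite big_seq [RHS]big_seq; apply: eq_bigr => i hi.
    have := hord_mem w q i; rewrite hi => /esym/eqP hS.
    rewrite /xval hS -mulrA; congr (_ * _).
    by case: (xi w i); case: (x i == Some q); rewrite /= ?mulr1 ?mulr0 ?mul0r.
  rewrite eT in hp.
  have hq : f w (prune (fun i => xi w i && (x i == Shat w i)) (Shat w))
            <= Qval D (xi w) (f w) x.
    rewrite /Qval; apply: le_bigmax_cond.
    exact: prune_feas (hSfeas w).
  lra.
have stepB : forall w, Qval D (xi w) (f w) xhat <= f w (Shat w).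
  move=> w; rewrite /Qval; apply: bigmax_le.
    exact: hSopt (kempty_feas _ _ _).
  by move=> S hS; apply: hSopt.
have le1 : forall P w, frakP P -> P 0 w <= 1.
  move=> P w hP; have [h0 h1] := hPd P hP.
  rewrite -h1 (bigD1 w) //= lerDl; apply: sumr_ge0 => i _; exact: h0.
have hub : has_ubound [set \sum_(w < m) P 0 w * Qval D (xi w) (f w) x | P in frakP].
  exists (\sum_(w < m) `|Qval D (xi w) (f w) x|) => z [P hP <-].
  apply: ler_sum => w _; have [h0 _] := hPd P hP.
  apply: le_trans (ler_wpM2l (h0 w) (ler_norm _)) _.
  exact: ler_piMl (normr_ge0 _) (le1 P w hP).
have h1 : \sum_(w < m) phat 0 w * Qval D (xi w) (f w) x <= PhiA frakP D xi f x.
  by apply: (ub_le_sup hub); exists phat.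
have h2 : PhiA frakP D xi f xhat <= \sum_(w < m) phat 0 w * f w (Shat w).
  apply: ge_sup; first by exists (\sum_(w < m) phat 0 w * Qval D (xi w) (f w) xhat), phat.
  move=> z [P hP <-]; apply: le_trans (hphat P hP).
  apply: ler_sum => w _; have [h0 _] := hPd P hP.
  apply: ler_wpM2l; [exact: h0 | exact: stepB].
have h3 : \sum_(w < m) phat 0 w * (f w (Shat w) - T w) <=
          \sum_(w < m) phat 0 w * Qval D (xi w) (f w) x.
  apply: ler_sum => w _; have [h0 _] := hPd phat hphatP.
  apply: ler_wpM2l; [exact: h0 | exact: stepA].
have e3 : \sum_(w < m) phat 0 w * (f w (Shat w) - T w) =
   \sum_(w < m) phat 0 w * f w (Shat w) -
   \sum_(q < k) \sum_(w < m) \sum_(i <- ord w q)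
      phat 0 w
      * marg (f w) q i (Spart (Shat w) q (ord w q) (index i (ord w q)))
      * (xi w i)%:R
      * (xval x q i)%:R.
  under eq_bigr do rewrite mulrBr.
  rewrite sumrB; congr (_ - _).
  rewrite /T; under eq_bigr do rewrite mulr_sumr.
  rewrite exchange_big /=; apply: eq_bigr => q _; apply: eq_bigr => w _.
  rewrite mulr_sumr; apply: eq_bigr => i _.
  by rewrite !mulrA.
rewrite e3 in h3; lra.
Qed.
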